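(* For each $t\in\{0,1,\dots,T\}$ and every state $(\bm{x},k)=((x_1,\dots,x_N),k)\in\mathbb{N}_0^{N+1}$, $$V^N_t(\bm{x},k)=\sum_{i=1}^N \tilde V^{N,i}_t(x_i,k).$$
   Context: Fix integers $N\ge1$, $T\ge1$, reals $\alpha_0,\beta_0>0$, and for each $i\in\mathcal{N}=\{1,\dots,N\}$ an integer failure threshold $\xi_i\ge1$ and costs $0<c_p^i<c_u^i$. $\mathbb{N}_0=\{0,1,2,\dots\}$. For real $r>0$ and $p\in(0,1)$, $NB(r,p)$ is the distribution on $\mathbb{N}_0$ with $P(n)=\frac{\Gamma(n+r)}{\Gamma(r)n!}p^r(1-p)^n$; $NB(0,p)$ is the point mass at $0$. For $t\in\{0,\dots,T\}$ let $p_t=\frac{\beta_0+Nt}{\beta_0+Nt+1}$. For $x\in\mathbb{N}_0$ let $\mathbb{I}_i(x)=1$ if $x\ge\xi_i$ and $0$ otherwise; the admissible actions for system $i$ at level $x$ are $\mathcal{A}_i(x)=\{0,1\}$ if $x<\xi_i$ and $\{1\}$ if $x\ge\xi_i$ ($a=1$ means replacement, $a=0$ means no action). Let $C_i(x,a)=a(1-\mathbb{I}_i(x))c_p^i+\mathbb{I}_i(x)c_u^i$. Original MDP: state $(\bm{x},k)\in\mathbb{N}_0^{N+1}$, actions $\bm{a}\in\prod_i\mathcal{A}_i(x_i)$, cost $C(\bm{x},\bm{a})=\sum_i C_i(x_i,a_i)$. $V^N_T(\bm{x},k)=\sum_i\mathbb{I}_i(x_i)c_u^i$, and for $t=T-1,\dots,0$: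 $V^N_t(\bm{x},k)=\min_{\bm{a}}\{C(\bm{x},\bm{a})+\mathbb{E}[V^N_{t+1}(\bm{x}'+\bm{Z},k+\sum_i Z_i)]\}$, where $Z_1,\dots,Z_N$ are i.i.d. $NB(\alpha_0+k,p_t)$ and $x'_i=x_i$ if $a_i=0$, $x'_i=0$ if $a_i=1$. Alternative (per-system) MDP: state $(x,k)\in\mathbb{N}_0^2$, $\tilde V^{N,i}_T(x,k)=\mathbb{I}_i(x)c_u^i$, and for $t=T-1,\dots,0$: $\tilde V^{N,i}_t(x,k)=\min_{a\in\mathcal{A}_i(x)}\{C_i(x,a)+\mathbb{E}[\tilde V^{N,i}_{t+1}(x(1-a)+Z,\;k+Z+K)]\}$, where $Z\sim NB(\alpha_0+k,p_t)$ and $K\sim NB((N-1)(\alpha_0+k),p_t)$ are independent. *)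

(* Defs.v *)
From HB Require Import structures.
From mathcomp Require Import all_boot all_order all_algebra.
From mathcomp Require Import all_classical all_reals all_analysis.
Set Implicit Arguments. Unset Strict Implicit. Unset Printing Implicit Defensive.
Import Order.TTheory GRing.Theory Num.Theory.
Local Open Scope classical_set_scope.
Local Open Scope ring_scope.

Section Model.
Variable R : realType.

(* Negative binomial pmf NB(r,p) at n :
   Gamma(n+r)/(Gamma(r) n!) p^r (1-p)^n, where
   Gamma(n+r)/Gamma(r) = r (r+1) ... (r+n-1) (rising factorial).
   For r = 0 this is the point mass at 0 (since 0 `^ 0 = 1). *)
Definition nb_pmf (r p : R) (n : nat) : R :=
  (\prod_(j < n) (r + j%:R)) / (n`!)%:R * (p `^ r) * (1 - p) ^+ n.

Definition p_of (N : nat) (beta0 : R) (t : nat) : R :=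
  (beta0 + (N * t)%:R) / (beta0 + (N * t)%:R + 1).

Definition Ind (xi : nat) (x : nat) : bool := (xi <= x)%N.

Definition admissible (xi : nat) (x : nat) (a : bool) : bool := Ind xi x ==> a.

Definition Ci (xi : nat) (cp cu : R) (x : nat) (a : bool) : R :=
  (a && ~~ Ind xi x)%:R * cp + (Ind xi x)%:R * cu.

Local Open Scope ereal_scope.

Section Original.
Variables (N T : nat) (alpha0 beta0 : R) (xi : 'I_N -> nat) (cp cu : 'I_N -> R).

Definition orig_terminal (x : 'I_N -> nat) : \bar R :=
  (\sum_(i < N) ((Ind (xi i) (x i))%:R * cu i))%:E.

Definition orig_cost (x : 'I_N -> nat) (a : {ffun 'I_N -> bool}) : R :=
  \sum_(i < N) Ci (xi i) (cp i) (cu i) (x i) (a i).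

(* E[f(Z)] with Z_1..Z_N i.i.d. NB(r,p): sum over all outcomes in N_0^N
   of the joint pmf times f (nonnegative extended-real sum). *)
Definition E_iid (r p : R) (f : {ffun 'I_N -> nat} -> \bar R) : \bar R :=
  \esum_(z in [set: {ffun 'I_N -> nat}])
     ((\prod_(i < N) nb_pmf r p (z i))%:E * f z).

(* Vaux m t : value with m remaining backward steps at time t;
   V^N_t := Vaux (T - t) t. *)
Fixpoint orig_aux (m t : nat) (x : 'I_N -> nat) (k : nat) : \bar R :=
  match m with
  | 0 => orig_terminal x
  | m'.+1 =>
    \big[Order.min/+oo]_(a : {ffun 'I_N -> bool} |
                          [forall i, admissible (xi i) (x i) (a i)])
      ((orig_cost x a)%:E +
       E_iid (alpha0 + k%:R) (p_of N beta0 t)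
         (fun z => orig_aux m' t.+1
                     (fun i => (if a i then 0 else x i) + z i)%N
                     (k + \sum_(i < N) z i)%N))
  end.

Definition V_orig (t : nat) (x : 'I_N -> nat) (k : nat) : \bar R :=
  orig_aux (T - t) t x k.

Section Alt.
Variable i : 'I_N.

(* E[f(Z,K)], Z ~ NB(r,p), K ~ NB((N-1) r, p) independent *)
Definition E_pair (r p : R) (f : nat * nat -> \bar R) : \bar R :=
  \esum_(zk in [set: nat * nat])
     ((nb_pmf r p zk.1 * nb_pmf ((N - 1)%:R * r) p zk.2)%:E * f zk).

Fixpoint alt_aux (m t : nat) (x : nat) (k : nat) : \bar R :=
  match m with
  | 0 => ((Ind (xi i) x)%:R * cu i)%:E
  | m'.+1 =>
    \big[Order.min/+oo]_(a : bool | admissible (xi i) x a)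
      ((Ci (xi i) (cp i) (cu i) x a)%:E +
       E_pair (alpha0 + k%:R) (p_of N beta0 t)
         (fun zk => alt_aux m' t.+1 ((if a then 0 else x) + zk.1)%N
                                  (k + zk.1 + zk.2)%N))
  end.

Definition V_alt (t : nat) (x : nat) (k : nat) : \bar R :=
  alt_aux (T - t) t x k.

End Alt.
End Original.
End Model.

(* Main.v *)
Require Import Defs.
From HB Require Import structures.
From mathcomp Require Import all_boot all_order all_algebra.
From mathcomp Require Import all_classical all_reals all_analysis.
From mathcomp Require Import ring lra.
Set Implicit Arguments. Unset Strict Implicit. Unset Printing Implicit Defensive.
Import Order.TTheory GRing.Theory Num.Theory.
Local Open Scope classical_set_scope.
Local Open Scope ring_scope.

Section Real.
Variable R : realType.

Definition bco (r : R) (n : nat) : R := (\prod_(j < n) (r + j%:R)) / (n`!)%:R.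

Lemma bco0 r : bco r 0 = 1.
Proof. by rewrite /bco big_ord0 fact0 divr1. Qed.

Lemma bcoS r n : bco r n.+1 = bco r n * (r + n%:R) / n.+1%:R.
Proof.
rewrite /bco big_ord_recr /= factS natrM.
have h1 : (n`!)%:R != 0 :> R by rewrite pnatr_eq0 -lt0n fact_gt0.
have h2 : (n.+1)%:R != 0 :> R by rewrite pnatr_eq0.
have h3 : 1 + n%:R != 0 :> R by rewrite addrC natr1.
field. by rewrite h3 h1.
Qed.

Lemma bco_conv x y n :
  \sum_(a < n.+1) bco x a * bco y (n - a) = bco (x + y) n.
Proof.
elim: n => [|n IH].
  by rewrite big_ord_recl big_ord0 /= !bco0 mulr1 addr0.
set S := \sum_(a < n.+2) _.
have h2 : (n.+1)%:R != 0 :> R by rewrite pnatr_eq0.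
suff : S * n.+1%:R = (x + y + n%:R) * \sum_(a < n.+1) bco x a * bco y (n - a).
  move=> H; apply: (mulIf h2); rewrite H IH bcoS; field.
  by rewrite addrC natr1.
have E : S * n.+1%:R = \sum_(a < n.+2) (a%:R * (bco x a * bco y (n.+1 - a)))
   + \sum_(a < n.+2) ((n.+1 - a)%:R * (bco x a * bco y (n.+1 - a))).
  rewrite -big_split /= mulr_suml; apply: eq_bigr => a _.
  have la : (a <= n.+1)%N by rewrite -ltnS.
  rewrite -mulrDl -natrD subnKC //; ring.
rewrite E big_ord_recl /= (_ : (nat_of_ord (@ord0 n.+1))%:R = 0 :> R) // mul0r add0r.
rewrite [\sum_(a < n.+2) _]big_ord_recr /= (_ : (n.+1 - @ord_max n.+1)%:R = 0 :> R) ?subnn // mul0r addr0.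
rewrite mulr_sumr -big_split /=; apply: eq_bigr => a _.
rewrite /bump /= add1n subSS.
have la : (a <= n)%N by rewrite -ltnS.
rewrite (subSn la) !bcoS.
have h3 : (a.+1)%:R != 0 :> R by rewrite pnatr_eq0.
have h4 : ((n - a).+1)%:R != 0 :> R by rewrite pnatr_eq0.
rewrite natrB //.
field. by rewrite !(addrC 1) !natr1 h3 h4.
Qed.

Lemma nbE (r p : R) n : nb_pmf r p n = bco r n * p `^ r * (1 - p) ^+ n.
Proof. by []. Qed.

Lemma nb_conv (r1 r2 p : R) c : 0 < p ->
  \sum_(a < c.+1) nb_pmf r1 p a * nb_pmf r2 p (c - a) = nb_pmf (r1 + r2) p c.
Proof.
move=> p0; rewrite nbE -bco_conv powRD; last by apply/implyP => _; rewrite gt_eqF.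
rewrite !mulr_suml; apply: eq_bigr => a _; rewrite !nbE.
have la : (a <= c)%N by rewrite -ltnS.
rewrite (_ : (1-p)^+c = (1-p)^+a * (1-p)^+(c-a)); last by rewrite -exprD subnKC.
ring.
Qed.

Lemma nb_ge0 (r p : R) n : 0 <= r -> 0 < p -> p < 1 -> 0 <= nb_pmf r p n.
Proof.
move=> r0 p0 p1; rewrite nbE /bco; apply: mulr_ge0; last by apply: exprn_ge0; lra.
apply: mulr_ge0; last exact: powR_ge0.
apply: divr_ge0 => //; apply: prodr_ge0 => j _; apply: addr_ge0 => //.
Qed.

Lemma nb0 (p : R) n : nb_pmf 0 p n = (n == 0)%:R.
Proof.
case: n => [|n]; first by rewrite nbE bco0 powRr0 expr0 !mulr1.
by rewrite nbE /bco big_ord_recl /= add0r mul0r !mul0r.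
Qed.

Local Open Scope ereal_scope.

Lemma conv_esum (h : nat -> nat -> \bar R) : (forall a b, 0 <= h a b) ->
  \esum_(z in [set: nat * nat]) h z.1 z.2 =
  \esum_(c in [set: nat]) \sum_(a < c.+1) h a (c - a)%N.
Proof.
move=> h0.
rewrite (eq_esum (I := [set: nat]) (b := fun c => \esum_(a in `I_c.+1) h a (c - a)%N)); last first.
  move=> c _; rewrite esum_fset ?finite_II //.
  by rewrite (fsbig_ord _ _ (fun a => h a (c - a)%N)).
rewrite esum_esum //.
rewrite [RHS](reindex_esum [set: nat * nat] ([set: nat] `*`` (fun i => `I_i.+1)) (fun z => (z.1 + z.2, z.1)%N)).
  by apply: eq_esum => -[a b] _ /=; rewrite addKn.
split.
- by move=> [a b] _ /=; split => //=; rewrite /= ltnS leq_addr.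
- by move=> [a b] [a' b'] _ _ /= [] e1 e2; subst a'; move: e1 => /addnI ->.
- move=> [c a] [_ /=]; rewrite ltnS => la.
  by exists (a, c - a)%N => //=; rewrite subnKC.
Qed.

Lemma esum_pair (T1 T2 : choiceType) (F : T1 * T2 -> \bar R) : (forall p, 0 <= F p) ->
  \esum_(p in [set: T1 * T2]) F p = \esum_(a in [set: T1]) \esum_(b in [set: T2]) F (a, b).
Proof.
move=> F0; rewrite esum_esum //.
rewrite (_ : [set: T1] `*`` (fun=> [set: T2]) = [set: T1 * T2]) //.
  by apply: eq_esum => -[a b].
by apply/seteqP; split => -[a b].
Qed.

Definition ins (n : nat) (i : 'I_n.+1) (a : nat) (w : {ffun 'I_n -> nat}) :
  {ffun 'I_n.+1 -> nat} := [ffun j => if unlift i j is Some j' then w j' else a].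

Lemma ins_i n (i : 'I_n.+1) a w : ins i a w i = a.
Proof. by rewrite ffunE unlift_none. Qed.

Lemma ins_lift n (i : 'I_n.+1) a w j : ins i a w (lift i j) = w j.
Proof. by rewrite ffunE liftK. Qed.

Lemma esum_ins n (i : 'I_n.+1) (F : {ffun 'I_n.+1 -> nat} -> \bar R) :
  \esum_(z in [set: {ffun 'I_n.+1 -> nat}]) F z =
  \esum_(p in [set: nat * {ffun 'I_n -> nat}]) F (ins i p.1 p.2).
Proof.
rewrite (reindex_esum [set: nat * {ffun 'I_n -> nat}] [set: {ffun 'I_n.+1 -> nat}]
   (fun p => ins i p.1 p.2)) //.
split.
- by [].
- move=> [a w] [a' w'] _ _ /= e.
  have ea : a = a' by rewrite -(ins_i i a w) e ins_i.
  subst a'; congr pair; apply/ffunP => j.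
  by rewrite -(ins_lift i a w) e ins_lift.
- move=> z _; exists (z i, [ffun j => z (lift i j)]) => //=.
  apply/ffunP => j; rewrite ffunE; case: unliftP => [j' ->|->] //.
  by rewrite ffunE.
Qed.

Lemma prod_ins n (i : 'I_n.+1) a w (f : nat -> R) :
  (\prod_(j < n.+1) f (ins i a w j) = f a * \prod_(j < n) f (w j))%R.
Proof.
rewrite (bigD1_ord i) //= ins_i; congr (_ * _)%R.
by apply: eq_bigr => j _; rewrite ins_lift.
Qed.

Lemma sum_ins n (i : 'I_n.+1) a w :
  (\sum_(j < n.+1) ins i a w j = a + \sum_(j < n) w j)%N.
Proof.
rewrite (bigD1_ord i) //= ins_i; congr (_ + _)%N.
by apply: eq_bigr => j _; rewrite ins_lift.
Qed.

Lemma setT0 : [set: {ffun 'I_0 -> nat}] = [set [ffun=> 0%N]].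
Proof.
apply/seteqP; split => z // _; apply/ffunP => -[] //.
Qed.

Lemma esum_nb0 (p : R) (G : nat -> \bar R) : (forall b, 0 <= G b) ->
  \esum_(b in [set: nat]) (nb_pmf 0 p b)%:E * G b = G 0%N.
Proof.
move=> G0; rewrite (esumID [set 0%N]); last first.
  by move=> b _; apply: mule_ge0 => //; rewrite nb0 lee_fin; case: (b == 0)%N.
rewrite setTI esum_set1; last by rewrite nb0 mul1e.
rewrite nb0 mul1e esum1 ?adde0 // => b [_ /eqP] /negPf.
by rewrite nb0 => ->; rewrite mul0e.
Qed.

Lemma marg_sum n (r p : R) (G : nat -> \bar R) :
  (0 <= r)%R -> (0 < p)%R -> (p < 1)%R -> (forall b, 0 <= G b) ->
  \esum_(z in [set: {ffun 'I_n -> nat}])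
     (\prod_(j < n) nb_pmf r p (z j))%:E * G (\sum_(j < n) z j)%N =
  \esum_(b in [set: nat]) (nb_pmf (n%:R * r) p b)%:E * G b.
Proof.
move=> r0 p0 p1; elim: n G => [|n IH] G G0.
  rewrite setT0 esum_set1; last by rewrite big_ord0 mul1e.
  by rewrite !big_ord0 mul1e mul0r esum_nb0.
have nbg a b : (0 <= (nb_pmf r p a)%:E * G b)%E by apply: mule_ge0 => //; rewrite lee_fin nb_ge0.
rewrite (esum_ins ord0) esum_pair /=; last first.
  by move=> q; apply: mule_ge0 => //; rewrite lee_fin; apply: prodr_ge0 => j _; exact: nb_ge0.
under eq_esum => a _.
  under eq_esum => w _ do rewrite prod_ins sum_ins EFinM muleAC muleC.
  rewrite (IH (fun s => (nb_pmf r p a)%:E * G (a + s)%N)); last by move=> b; exact: nbg.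
over.
have hq : forall q : nat * nat, 0 <= (nb_pmf r p q.1 * nb_pmf (n%:R * r) p q.2)%:E * G (q.1 + q.2)%N.
  by move=> q; apply: mule_ge0 => //; rewrite lee_fin mulr_ge0 // nb_ge0 // mulr_ge0.
transitivity (\esum_(q in [set: nat * nat]) (nb_pmf r p q.1 * nb_pmf (n%:R * r) p q.2)%:E * G (q.1 + q.2)%N).
  rewrite esum_pair //=; apply: eq_esum => a _; apply: eq_esum => b _.
  by rewrite EFinM muleCA muleA.
rewrite (@conv_esum (fun a b => (nb_pmf r p a * nb_pmf (n%:R * r) p b)%:E * G (a + b)%N)); last first.
  by move=> a b; exact: (hq (a, b)).
apply: eq_esum => c _.
rewrite (eq_bigr (fun a : 'I_c.+1 => (nb_pmf r p a * nb_pmf (n%:R * r) p (c - a))%:E * G c)); last first.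
  by move=> a _; rewrite subnKC // -ltnS.
rewrite -ge0_sume_distrl; last by move=> a _; rewrite lee_fin mulr_ge0 // nb_ge0 // mulr_ge0.
rewrite sumEFin nb_conv //; congr (_%:E * _); congr nb_pmf.
by rewrite -natr1 mulrDl mul1r addrC.
Qed.

Lemma marg_i n (i : 'I_n.+1) (r p : R) (g : nat -> nat -> \bar R) :
  (0 <= r)%R -> (0 < p)%R -> (p < 1)%R -> (forall a b, 0 <= g a b) ->
  \esum_(z in [set: {ffun 'I_n.+1 -> nat}])
     (\prod_(j < n.+1) nb_pmf r p (z j))%:E * g (z i) (\sum_(j < n.+1) z j)%N =
  \esum_(zk in [set: nat * nat])
     (nb_pmf r p zk.1 * nb_pmf (n%:R * r) p zk.2)%:E * g zk.1 (zk.1 + zk.2)%N.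
Proof.
move=> r0 p0 p1 g0.
have nbg a b : (0 <= (nb_pmf r p a)%:E * g a b)%E by apply: mule_ge0 => //; rewrite lee_fin nb_ge0.
rewrite (esum_ins i) esum_pair /=; last first.
  by move=> q; apply: mule_ge0 => //; rewrite lee_fin; apply: prodr_ge0 => j _; exact: nb_ge0.
under eq_esum => a _.
  under eq_esum => w _ do rewrite prod_ins sum_ins ins_i EFinM muleAC muleC.
  rewrite (@marg_sum n r p (fun s => (nb_pmf r p a)%:E * g a (a + s)%N) r0 p0 p1 (fun b => nbg a (a + b)%N)).
over.
rewrite esum_pair /=; last first.
  by move=> q; apply: mule_ge0 => //; rewrite lee_fin mulr_ge0 // nb_ge0 // mulr_ge0.
apply: eq_esum => a _; apply: eq_esum => b _.
by rewrite EFinM muleCA muleA.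
Qed.

Lemma bigmin_sum N (P : 'I_N -> pred bool) (f : 'I_N -> bool -> \bar R) :
  (forall i, P i true) -> (forall i b, 0 <= f i b) ->
  \big[Order.min/+oo]_(a : {ffun 'I_N -> bool} | [forall i, P i (a i)])
      \sum_(i < N) f i (a i)
  = \sum_(i < N) \big[Order.min/+oo]_(b : bool | P i b) f i b.
Proof.
move=> HP f0; apply/eqP; rewrite eq_le; apply/andP; split.
  pose s i := @eq_bigmin _ _ bool +oo true (P i) (f i) (HP i) (fun _ _ => leey _).
  pose a := [ffun i => s2val (s i)].
  have Pa : [forall i, P i (a i)].
    by apply/forallP => i; rewrite ffunE; have := s2valP (s i).
  apply: le_trans (bigmin_le_cond _ _ Pa) _.
  apply: lee_sum => i _; rewrite ffunE; case: (s i) => /= b _ ->; exact: lexx.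
apply: le_bigmin; first exact: leey.
move=> a /forallP Pa; apply: lee_sum => i _.
exact: bigmin_le_cond.
Qed.
End Real.

Theorem theorem1 (R : realType) (N T : nat) (alpha0 beta0 : R)
    (xi : 'I_N -> nat) (cp cu : 'I_N -> R) :
  (1 <= N)%N -> (1 <= T)%N -> 0 < alpha0 -> 0 < beta0 ->
  (forall i, (1 <= xi i)%N) ->
  (forall i, 0 < cp i /\ cp i < cu i) ->
  forall (t : nat), (t <= T)%N ->
  forall (x : 'I_N -> nat) (k : nat),
    V_orig T alpha0 beta0 xi cp cu t x k =
    (\sum_(i < N) V_alt T alpha0 beta0 xi cp cu i t (x i) k)%E.
Proof.
case: N xi cp cu => [//|n] xi cp cu _ _ a0 b0 _ hc t _ x k.
rewrite /V_orig /V_alt; move: (T - t)%N => m.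
have pt s : 0 < p_of n.+1 beta0 s /\ p_of n.+1 beta0 s < 1.
  have B0 : 0 < beta0 + (n.+1 * s)%:R by apply: ltr_wpDr.
  split; first by apply: divr_gt0 => //; lra.
  by rewrite /p_of ltr_pdivrMr ?mul1r; lra.
have c0 i : 0 <= cp i /\ 0 <= cu i by have [h1 h2] := hc i; split; lra.
have Ci0 i y b : 0 <= Ci (xi i) (cp i) (cu i) y b.
  by rewrite /Ci; have [h1 h2] := c0 i; apply: addr_ge0; apply: mulr_ge0.
have r0 (kk : nat) : 0 <= alpha0 + kk%:R by apply: addr_ge0 => //; lra.
have Ep0 (s kk : nat) (f : nat * nat -> \bar R) : (forall q, (0 <= f q)%E) ->
    (0 <= E_pair n.+1 (alpha0 + kk%:R) (p_of n.+1 beta0 s) f)%E.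
  move=> f0; apply: esum_ge0 => q _; apply: mule_ge0 => //; rewrite lee_fin.
  have [p0 p1] := pt s.
  apply: mulr_ge0; apply: nb_ge0 => //; apply: mulr_ge0 => //.
have alt0 : forall i mm s y kk, (0 <= alt_aux alpha0 beta0 xi cp cu i mm s y kk)%E.
  move=> i mm; elim: mm => [|mm IH] s y kk /=.
    by rewrite lee_fin; have [h1 h2] := c0 i; apply: mulr_ge0.
  apply: le_bigmin; first exact: leey.
  by move=> b _; apply: adde_ge0; [rewrite lee_fin|apply: Ep0].
elim: m t x k => [|m IH] t x k /=.
  by rewrite /orig_terminal sumEFin.
have [p0 p1] := pt t.
set r := alpha0 + k%:R; set p := p_of n.+1 beta0 t.
pose g i (b : bool) := ((Ci (xi i) (cp i) (cu i) (x i) b)%:E +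
   E_pair n.+1 r p (fun zk => alt_aux alpha0 beta0 xi cp cu i m t.+1
      ((if b then 0 else x i) + zk.1)%N (k + zk.1 + zk.2)%N))%E.
rewrite (eq_bigr (fun a : {ffun 'I_n.+1 -> bool} => \sum_(i < n.+1) g i (a i))); last first.
  move=> a _; rewrite /g big_split /= /orig_cost sumEFin; congr (_ + _)%E.
  rewrite /E_iid.
  under eq_esum => z _ do rewrite IH ge0_sume_distrr ?(fun i _ => alt0 _ _ _ _ _) //.
  rewrite esum_sum; last first.
    move=> z i _ _; apply: mule_ge0 => //; rewrite lee_fin; apply: prodr_ge0 => j _.
    exact: (nb_ge0 _ (r0 k) p0 p1).
  apply: eq_bigr => i _.
  rewrite (@marg_i _ n i r p (fun u s => alt_aux alpha0 beta0 xi cp cu i m t.+1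
      ((if a i then 0 else x i) + u)%N (k + s)%N) (r0 k) p0 p1 (fun _ _ => alt0 _ _ _ _ _)).
  rewrite /E_pair subn1 /=; apply: eq_esum => q _; by rewrite addnA.
rewrite (@bigmin_sum _ n.+1 (fun i => admissible (xi i) (x i)) g) //.
- by move=> i; rewrite /admissible implybT.
- move=> i b; rewrite /g; apply: adde_ge0; [rewrite lee_fin|apply: Ep0] => //.
Qed.
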